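(* Let $k$ be a positive integer with $k\equiv 3\pmod 4$, and let $\mathrm{SG}(n)$ denote the Sprague--Grundy value of a pile of $n$ tokens in the game $i\textsc{-Mark}(\{2\},\{k\})$. Let $b=2k$, $c_0=4k$, and $c_m=k(c_{m-1}+2)$ for $m\ge 1$. Let $I_0=[0,b-1]$, $I_1=[b+1,c_0-1]$, and $I_m=[c_{m-2}+1,c_{m-1}-1]$ for $m\ge 2$ (integer intervals). Then: (1) $\mathrm{SG}(b)=2$ and $\mathrm{SG}(c_m)=2$ for all $m\ge 0$; (2) the sequence of SG values of the elements of $I_0$, in increasing order, is $(0,0,1,1)^{z_0},0,0$ with $z_0=(b-2)/4$; (3) for $m$ odd, the sequence of SG values of the elements of $I_m$ is $(1,0,0,1)^{z_m},1$, where $z_1=(c_0-b-2)/4$ and $z_m=(c_{m-1}-c_{m-2}-2)/4$ for $m\ge 3$; (4) for $m\ge 2$ even, the sequence of SG values of the elements of $I_m$ is $(0,0,1,1)^{z_m},0$ with $z_m=(c_{m-1}-c_{m-2}-2)/4$. Here $X^z$ denotes the $z$-fold concatenation of the finite sequence $X$.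
   Context: For a nonempty set $S$ of positive integers and a nonempty set $D$ of integers larger than $1$, the impartial game $i\textsc{-Mark}(S,D)$ is played on a single pile of $n\ge 0$ tokens: a move either replaces $n$ by $n-s$ for some $s\in S$ with $s\le n$, or replaces $n$ by $n/d$ for some $d\in D$ dividing $n$ (with $n>0$). The Sprague--Grundy value is defined recursively by $\mathrm{SG}(n)=\mathrm{mex}\{\mathrm{SG}(w): w \text{ an option of } n\}$, where $\mathrm{mex}(T)$ is the smallest nonnegative integer not in $T$. *)

(* Defs.v *)
From mathcomp Require Import all_boot.
Set Implicit Arguments. Unset Strict Implicit. Unset Printing Implicit Defensive.

(* Game i-Mark(S,D) with S, D given as finite lists (the statement uses
   S = [:: 2], D = [:: k]). *)

Definition mex (s : seq nat) : nat :=
  find (fun m => m \notin s) (iota 0 (size s).+1).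

Definition options (S D : seq nat) (n : nat) : seq nat :=
  [seq n - s | s <- S & (0 < s) && (s <= n)] ++
  [seq n %/ d | d <- D & (1 < d) && (d %| n) && (0 < n)].

(* Sprague-Grundy value; every option is strictly smaller than n (s > 0, d > 1),
   so fuel n.+1 suffices. *)
Fixpoint sg_aux (S D : seq nat) (fuel n : nat) : nat :=
  match fuel with
  | 0 => 0
  | f.+1 => mex [seq sg_aux S D f w | w <- options S D n]
  end.

Definition SG (S D : seq nat) (n : nat) : nat := sg_aux S D n.+1 n.

Fixpoint cseq (k m : nat) : nat :=
  match m with
  | 0 => 4 * k
  | m'.+1 => k * (cseq k m' + 2)
  end.

Definition sg_on (k lo hi : nat) : seq nat :=
  [seq SG [:: 2] [:: k] n | n <- iota lo (hi.+1 - lo)].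

Definition rep (z : nat) (X : seq nat) : seq nat := flatten (nseq z X).

(* Main.v *)
Require Import Defs.
From mathcomp Require Import all_boot zify.

Lemma mex0 : mex [::] = 0. Proof. by []. Qed.
Lemma mex1 a v : v <= 1 -> a = 1 - v -> mex [:: a] = v.
Proof. by case: v => [|[|v]] //= _ ->. Qed.
Lemma mex2 a b v : v <= 1 -> a = 1 - v -> b != v -> mex [:: a; b] = v.
Proof.
case: v => [|[|v]] //= _ ->; rewrite /mex /=.
- by case: b => [|[|b]].
- by case: b => [|[|b]].
Qed.
Lemma mex2' a b : (a = 0 /\ b = 1) \/ (a = 1 /\ b = 0) -> mex [:: a; b] = 2.
Proof. by case => -[-> ->]. Qed.

Definition Po n := n %/ 2 %% 2.
Definition Pe n := (n + 3) %/ 2 %% 2.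
Definition pat j n := if odd j then Pe n else Po n.
Definition d k j := if j is j'.+1 then cseq k j' else 2 * k.
Arguments d : simpl never.

Section Main.
Variable k : nat.
Hypothesis hk4 : k %% 4 = 3.

Let sg := SG [:: 2] [:: k].

Lemma k3 : 3 <= k. Proof. lia. Qed.

Lemma optE n : options [::2] [::k] n =
  (if 2 <= n then [:: n-2] else [::]) ++
  (if (k %| n) && (0 < n) then [:: n %/ k] else [::]).
Proof.
have k1 : 1 < k by lia.
rewrite /options /= k1 /=. by case: (2 <= n); case: (k %| n); case: (0 < n).
Qed.

Lemma opt_lt n w : w \in options [::2] [::k] n -> w < n.
Proof.
rewrite optE mem_cat; case/orP.
  case: ifP => // h2; rewrite inE => /eqP ->; lia.
case: ifP => // /andP[_ hn]; rewrite inE => /eqP ->.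
apply: ltn_Pdiv => //; lia.
Qed.

Lemma sg_aux_eq f1 f2 n : n < f1 -> n < f2 ->
  sg_aux [::2] [::k] f1 n = sg_aux [::2] [::k] f2 n.
Proof.
elim: f1 f2 n => [|f1 IH] [|f2] n //= h1 h2.
congr mex; apply/eq_in_map => w /opt_lt hw; apply: IH; lia.
Qed.

Lemma SGrec n : sg n = mex
  ((if 2 <= n then [:: sg (n-2)] else [::]) ++
   (if (k %| n) && (0 < n) then [:: sg (n %/ k)] else [::])).
Proof.
rewrite /sg /SG /= optE.
have k1 : 1 < k by lia.
case: ifP => h2; case: ifP => /= h3 //.
- rewrite (@sg_aux_eq n (n-2).+1 (n-2)); try lia.
  rewrite (@sg_aux_eq n (n %/ k).+1 (n %/ k)) //; case/andP: h3 => _ h3;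
  have := ltn_Pdiv k1 h3; lia.
- rewrite (@sg_aux_eq n (n-2).+1 (n-2)) //; lia.
- rewrite (@sg_aux_eq n (n %/ k).+1 (n %/ k)) //; case/andP: h3 => _ h3;
  have := ltn_Pdiv k1 h3; lia.
Qed.

Lemma kt : exists t, k = 4 * t + 3.
Proof. exists (k %/ 4); lia. Qed.

Lemma d0 : d k 0 = 2 * k. Proof. by []. Qed.
Lemma d1 : d k 1 = 4 * k. Proof. by []. Qed.
Lemma dS j : d k j.+2 = k * (d k j.+1 + 2). Proof. by []. Qed.

Lemma dmod j : d k j %% 4 = (if odd j then 0 else 2).
Proof.
have [t ht] := kt.
elim: j => [|j IH]; first by rewrite d0 /=; lia.
case: j IH => [|j] IH; first by rewrite d1 /=; lia.
rewrite dS; have -> : odd j.+2 = odd j by rewrite /= negbK.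
move: IH; have -> : odd j.+1 = ~~ odd j by []. case: (odd j) => /= IH.
- have : exists a, d k j.+1 = 4 * a + 2 by exists (d k j.+1 %/ 4); lia.
  case=> a; rewrite /= => ->; rewrite ht; nia.
- have : exists a, d k j.+1 = 4 * a by exists (d k j.+1 %/ 4); lia.
  case=> a; rewrite /= => ->; rewrite ht; nia.
Qed.

Lemma dk j : k %| d k j.
Proof.
case: j => [|[|j]]; first by rewrite d0 dvdn_mull.
  by rewrite d1 dvdn_mull.
by rewrite dS dvdn_mulr.
Qed.

Lemma dge_gap j : 2 * k <= d k j /\ d k j + 2 * k <= d k j.+1.
Proof.
have := k3; elim: j => [|j IH] h3; first by rewrite d0 d1; lia.
have [IH1 IH2] := IH h3; split; first lia.
rewrite dS; nia.
Qed.
Lemma dge j : 2 * k <= d k j. Proof. by case: (dge_gap j). Qed.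
Lemma dgap j : d k j + 2 * k <= d k j.+1. Proof. by case: (dge_gap j). Qed.

Lemma mulk_lt a b : a * k < b * k -> a < b.
Proof. by rewrite ltn_pmul2r //; have := k3; lia. Qed.

Definition val n v := (n < 2 * k -> v = Po n) /\ (forall j, n = d k j -> v = 2) /\
  (forall j, d k j < n < d k j.+1 -> v = pat j n).

Lemma oddSS i : odd i.+2 = odd i. Proof. by rewrite /= negbK. Qed.

Section Clauses.
Variable n : nat.
Hypothesis IH : forall m, m < n -> val m (sg m).

Lemma IHA m : m < n -> m < 2 * k -> sg m = Po m.
Proof. by move=> h; case: (IH _ h). Qed.
Lemma IHB m j : m < n -> m = d k j -> sg m = 2.
Proof. by move=> h; case: (IH _ h) => _ [hB _]; apply: hB. Qed.
Lemma IHC m j : m < n -> d k j < m < d k j.+1 -> sg m = pat j m.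
Proof. by move=> h; case: (IH _ h) => _ [_ hC]; apply: hC. Qed.

Lemma clauseA : n < 2 * k -> sg n = Po n.
Proof.
move=> hn; have [t ht] := kt; rewrite SGrec.
case: (leqP 2 n) => h2.
- have ha : sg (n-2) = Po (n-2) by apply: IHA; lia.
  case: (boolP ((k %| n) && (0 < n))) => [/andP[hd hp]|hd].
  + have hq := divnK hd. set q := n %/ k in hq *.
    have q1 : q = 1.
      have : q * k < 2 * k by lia.
      move/mulk_lt; have : q != 0 by apply/eqP=> q0; rewrite q0 in hq; lia.
      lia.
    rewrite q1 mul1n in hq.
    have hb : sg q = Po q by apply: IHA; lia.
    rewrite /= ha hb q1; apply: mex2; rewrite /Po; lia.
  + rewrite /= ha; apply: mex1; rewrite /Po; lia.
- case: ifP => [/andP[hd hp]|_].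
    by have := dvdn_leq hp hd; lia.
  by rewrite /= mex0 /Po; lia.
Qed.

Lemma clauseB j : n = d k j -> sg n = 2.
Proof.
have [t ht] := kt; have k3' := k3.
move=> hn; rewrite SGrec ifT; last by have := dge j; lia.
rewrite ifT; last by rewrite hn dk /=; have := dge j; lia.
rewrite /=; apply: mex2'.
case: j hn => [|[|i]] hn.
- rewrite d0 in hn.
  have -> : n %/ k = 2 by rewrite hn mulnK //; lia.
  rewrite (@IHA (n-2)); try lia. rewrite (@IHA 2); try lia.
  rewrite /Po; lia.
- rewrite d1 in hn.
  have -> : n %/ k = 4 by rewrite hn mulnK //; lia.
  rewrite (@IHC (n-2) 0); try (rewrite d0 d1; lia); last lia.
  rewrite (@IHA 4); try lia.
  rewrite /pat /Po /=; lia.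
- have g1 := dgap i.+1; have g0 := dge i.+1.
  have hq : n %/ k = d k i.+1 + 2 by rewrite hn dS mulKn //; lia.
  rewrite hq.
  have m1 := dmod i.+1; have m2 := dmod i.+2.
  rewrite (@IHC (n-2) i.+1); try lia.
  rewrite (@IHC (d k i.+1 + 2) i.+1); try lia.
  move: m1 m2; rewrite /pat oddSS /=.
  case: (odd i) => /= m1 m2; rewrite /Po /Pe; lia.
Qed.

Lemma clauseC j : d k j < n < d k j.+1 -> sg n = pat j n.
Proof.
have [t ht] := kt; have k3' := k3.
move=> hn.
have g0 := dge j; have g1 := dgap j; have mj := dmod j.
have hv : (pat j n) <= 1 by rewrite /pat; case: (odd j); rewrite /Po /Pe; lia.
have ha : sg (n-2) = 1 - (pat j n) \/ (sg (n-2) = 2 /\ (pat j n) = 0 /\ ~~ (k %| n)).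
  case: (ltngtP n (d k j + 2)) => h.
  - have {h} h' : n = d k j + 1 by lia.
    left; case: j hn g0 g1 mj hv h' => [|i] hn g0 g1 mj hv h.
      rewrite (@IHA (n-2)); try (rewrite d0 in h; lia).
      rewrite /pat /Po /=; rewrite d0 in h; lia.
    have g2 := dgap i.
    rewrite (@IHC (n-2) i); try lia.
    move: mj; rewrite /pat /=; case: (odd i) => /= mj; rewrite /Po /Pe; lia.
  - left; rewrite (@IHC (n-2) j); try lia.
    rewrite /pat; case: (odd j); rewrite /Po /Pe; lia.
  - right; split; first by apply: (@IHB _ j); lia.
    split; first by move: mj; rewrite /pat; case: (odd j) => mj; rewrite /Po /Pe; lia.
    rewrite h dvdn_addr ?dk //; apply/negP => /dvdn_leq; lia.
have hb : k %| n -> sg (n %/ k) != (pat j n).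
  move=> hd; have hq := divnK hd; set q := n %/ k in hq *; clearbody q.
  have hn4 : n = 4 * (q * t) + 3 * q by rewrite -hq ht; lia.
  have qn : q < n.
    have qp : 0 < q by apply: contraTT (hd); rewrite -leqNgt leqn0 => /eqP q0; move: hq; rewrite q0; lia.
    rewrite -hq; apply: (@leq_trans (q * 2)); first lia. by rewrite leq_mul2l; lia.
  case: j hn g0 g1 mj hv {ha} => [|[|i]] hn g0 g1 mj hv.
  - rewrite d0 d1 -hq in hn.
    have : 2 < q by apply: mulk_lt; lia.
    have : q < 4 by apply: mulk_lt; lia.
    move=> q4 q2; have q3 : q = 3 by lia.
    rewrite (@IHA q); try lia.
    rewrite /pat /Po /=; lia.
  - have e2 : d k 2 = k * (4 * k + 2) by rewrite dS d1.
    rewrite d1 e2 -hq in hn.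
    have : 4 < q by apply: mulk_lt; lia.
    have : q < 4 * k + 2 by apply: mulk_lt; lia.
    move=> qa qb.
    have vE : pat 1 n = Pe n by [].
    case: (ltngtP q (2 * k)) => h1.
    + rewrite (@IHA q) // vE /Po /Pe; lia.
    + case: (ltngtP q (4 * k)) => h2.
      * rewrite (@IHC q 0) ?d0 ?d1 //; last lia. rewrite vE /pat /Po /Pe /=; lia.
      * have h3 : q = 4 * k + 1 by lia.
        have g12 := dgap 1. rewrite d1 e2 in g12.
        rewrite (@IHC q 1) //; last (rewrite d1 e2; lia). rewrite vE /pat /Po /Pe /=; lia.
      * rewrite (@IHB q 1) ?d1 //; lia.
    + rewrite (@IHB q 0) ?d0 //; lia.
  - have g2 := dgap i.+1; have m1 := dmod i.+1.
    have e3 := dS i.+1; have e2 := dS i.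
    rewrite -hq e3 in hn.
    have : d k i.+1 + 2 < q by apply: mulk_lt; move: (hn); rewrite e2; lia.
    have : q < d k i.+2 + 2 by apply: mulk_lt; lia.
    move=> qa qb.
    case: (ltngtP q (d k i.+2)) => h1.
    + rewrite (@IHC q i.+1) //; last lia.
      rewrite /pat oddSS /=; case: (odd i) => /=; rewrite /Po /Pe; lia.
    + have h3 : q = d k i.+2 + 1 by lia.
      have g3 := dgap i.+2.
      rewrite (@IHC q i.+2) //; last lia.
      move: mj; rewrite /pat oddSS; case: (odd i) => mj; rewrite /Po /Pe; lia.
    + rewrite (@IHB q i.+2) //; lia.
rewrite SGrec ifT; last lia.
case: (boolP (k %| n)) => hd.
- rewrite ifT /=; last lia.
  case: ha => [ha | [_ [_ /negP //]]].
  by rewrite ha; apply: mex2 => //; apply: hb.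
- rewrite andFb /=.
  case: ha => [ha | [ha [hv0 _]]]; first by rewrite ha; apply: mex1.
  by rewrite ha hv0.
Qed.
End Clauses.

Lemma mainval n : val n (sg n).
Proof.
elim/ltn_ind: n => n IH; split; [exact: clauseA | split].
- move=> j; exact: clauseB.
- move=> j; exact: clauseC.
Qed.
End Main.

Lemma map_iota_shift (P : nat -> nat) x lo : (forall n, P (n + 4) = P n) ->
  map P (iota (lo + 4) x) = map P (iota lo x).
Proof.
move=> hP; elim: x lo => //= x IH lo.
by rewrite hP -addSn IH.
Qed.

Lemma map_rep (P : nat -> nat) lo z r : (forall n, P (n + 4) = P n) ->
  map P (iota lo (4 * z + r)) = rep z (map P (iota lo 4)) ++ map P (iota lo r).
Proof.
move=> hP; elim: z lo => [|z IH] lo; first by rewrite muln0 add0n.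
rewrite mulnS -addnA iotaD map_cat map_iota_shift // IH.
have -> : forall X, rep z.+1 X = X ++ rep z X by []. by rewrite catA.
Qed.

Lemma Po4 n : Po (n + 4) = Po n. Proof. rewrite /Po; lia. Qed.
Lemma Pe4 n : Pe (n + 4) = Pe n. Proof. rewrite /Pe; lia. Qed.

Lemma Po_rep lo z : lo %% 4 = 3 ->
  map Po (iota lo (4 * z + 1)) = rep z [:: 1; 0; 0; 1] ++ [:: 1].
Proof.
move=> h; rewrite (@map_rep Po); last exact: Po4.
rewrite /= /Po.
have -> : lo %/ 2 %% 2 = 1 by lia.
have -> : lo.+1 %/ 2 %% 2 = 0 by lia.
have -> : lo.+2 %/ 2 %% 2 = 0 by lia.
have -> : lo.+3 %/ 2 %% 2 = 1 by lia.
by [].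
Qed.

Lemma Pe_rep lo z : lo %% 4 = 1 ->
  map Pe (iota lo (4 * z + 1)) = rep z [:: 0; 0; 1; 1] ++ [:: 0].
Proof.
move=> h; rewrite (@map_rep Pe); last exact: Pe4.
rewrite /= /Pe.
have -> : (lo + 3) %/ 2 %% 2 = 0 by lia.
have -> : (lo.+1 + 3) %/ 2 %% 2 = 0 by lia.
have -> : (lo.+2 + 3) %/ 2 %% 2 = 1 by lia.
have -> : (lo.+3 + 3) %/ 2 %% 2 = 1 by lia.
by [].
Qed.

Lemma Po_rep0 z : map Po (iota 0 (4 * z + 2)) = rep z [:: 0; 0; 1; 1] ++ [:: 0; 0].
Proof. by rewrite (@map_rep Po); last exact: Po4. Qed.

Lemma interval_map k (hk4 : k %% 4 = 3) j lo hi : lo = (d k j).+1 -> hi = d k j.+1 - 1 ->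
  sg_on k lo hi = map (pat j) (iota lo (hi.+1 - lo)).
Proof.
move=> hl hh; rewrite /sg_on; apply/eq_in_map => n; rewrite mem_iota => hn.
have g := @dgap k hk4 j.
by apply: (@mainval k hk4 n).2.2; lia.
Qed.

Theorem mainTheorem2 (k : nat) (hk : 0 < k) (hk4 : k %% 4 = 3) :
  let sg := SG [:: 2] [:: k] in
  let b := 2 * k in
  let c := cseq k in
  (* (1) *)
  (sg b = 2 /\ forall m, sg (c m) = 2) /\
  (* (2) I_0 = [0, b-1] *)
  sg_on k 0 (b - 1) = rep ((b - 2) %/ 4) [:: 0; 0; 1; 1] ++ [:: 0; 0] /\
  (* (3) m odd: I_1 = [b+1, c_0 - 1], and I_m = [c_{m-2}+1, c_{m-1}-1] for m >= 3 odd *)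
  sg_on k b.+1 (c 0 - 1) = rep ((c 0 - b - 2) %/ 4) [:: 1; 0; 0; 1] ++ [:: 1] /\
  (forall m, 3 <= m -> odd m ->
     sg_on k (c (m - 2)).+1 (c (m - 1) - 1)
     = rep ((c (m - 1) - c (m - 2) - 2) %/ 4) [:: 1; 0; 0; 1] ++ [:: 1]) /\
  (* (4) m >= 2 even *)
  (forall m, 2 <= m -> ~~ odd m ->
     sg_on k (c (m - 2)).+1 (c (m - 1) - 1)
     = rep ((c (m - 1) - c (m - 2) - 2) %/ 4) [:: 0; 0; 1; 1] ++ [:: 0]).
Proof.
move=> sg b c.
have hc : forall m, c m = d k m.+1 by [].
split; [split|split; [|split; [|split]]].
- exact: ((@mainval k hk4 b).2.1 0).
- move=> m; exact: ((@mainval k hk4 (c m)).2.1 m.+1).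
- rewrite /sg_on.
  have -> : (b - 1).+1 - 0 = 4 * ((b - 2) %/ 4) + 2 by rewrite /b; lia.
  rewrite -Po_rep0; apply/eq_in_map => n; rewrite mem_iota => hn.
  apply: (@mainval k hk4 n).1; rewrite /b in hn; lia.
- rewrite (@interval_map k hk4 0 b.+1 (c 0 - 1)) //.
  have -> : (c 0 - 1).+1 - b.+1 = 4 * ((c 0 - b - 2) %/ 4) + 1.
    rewrite hc /b d1; lia.
  by apply: Po_rep; rewrite /b; lia.
- move=> m h3 ho.
  have [j hj] : exists j, m = j.+2 by exists (m - 2); lia.
  subst m; rewrite oddSS in ho; rewrite !subSS subn0.
  rewrite !hc (@interval_map k hk4 j.+1 (d k j.+1).+1 (d k j.+2 - 1)) //.
  have m1 := @dmod k hk4 j.+1; have m2 := @dmod k hk4 j.+2; have g := @dgap k hk4 j.+1.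
  move: m1 m2; rewrite oddSS /= ho /= => m1 m2.
  have -> : (d k j.+2 - 1).+1 - (d k j.+1).+1 = 4 * ((d k j.+2 - d k j.+1 - 2) %/ 4) + 1 by lia.
  have -> : pat j.+1 = Po by rewrite /pat /= ho.
  apply: Po_rep; lia.
- move=> m h3 ho.
  have [j hj] : exists j, m = j.+2 by exists (m - 2); lia.
  subst m; rewrite oddSS in ho; rewrite !subSS subn0.
  rewrite !hc (@interval_map k hk4 j.+1 (d k j.+1).+1 (d k j.+2 - 1)) //.
  have m1 := @dmod k hk4 j.+1; have m2 := @dmod k hk4 j.+2; have g := @dgap k hk4 j.+1.
  move: m1 m2; rewrite oddSS /= (negbTE ho) /= => m1 m2.
  have -> : (d k j.+2 - 1).+1 - (d k j.+1).+1 = 4 * ((d k j.+2 - d k j.+1 - 2) %/ 4) + 1 by lia.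
  have -> : pat j.+1 = Pe by rewrite /pat /= (negbTE ho).
  apply: Pe_rep; lia.
Qed.
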